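(* Let $g,h$ be non-identical monotone linear functions. Then: (i) $\theta(h)-\theta(g)\in(0,\pi)_{2\pi}$ $\iff$ $\theta(h\circ g)\in(\theta(g),\theta(h))_{2\pi}$ $\iff$ $\theta(g\circ h)\in(\theta(g),\theta(h))_{2\pi}$. (ii) $\theta(h)-\theta(g)\in\{0,\pi\}_{2\pi}$ $\iff$ $\theta(h\circ g)\in\{\theta(g),\theta(h),\bot\}$ $\iff$ $\theta(g\circ h)\in\{\theta(g),\theta(h),\bot\}$. (iii) If $\theta(h)=\theta(g)$ then $\theta(h\circ g)=\theta(g\circ h)=\theta(h)$. (iv) $\theta(h\circ g)=\bot\iff\theta(g\circ h)=\bot$, and either of these implies $\theta(h)-\theta(g)=_{2\pi}\pi$.
   Context: A linear function is $f(x)=ax+b$, $a,b\in\mathbb{R}$; it is monotone if $a>0$ and identical if $f(x)=x$. The vector of $f$ is $\vec f=(b,1-a)^\top$ and $\theta(f)\in[0,2\pi)$ is its polar angle, with $\theta(f)=\bot$ if $\vec f=0$. $\theta_1=_{2\pi}\theta_2$ means $\theta_1-\theta_2\in2\pi\mathbb{Z}$; $(\theta_1,\theta_2)_{2\pi}=\{\theta\in(\lambda_1,\lambda_2)\mid\lambda_1=_{2\pi}\theta_1,\lambda_2=_{2\pi}\theta_2,\lambda_2-\lambda_1\in[0,2\pi)\}$; for a set $S$, $S_{2\pi}=\{\theta\mid\theta=_{2\pi}\lambda,\ \lambda\in S\}$. *)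

(* Defs.v *)
From Stdlib Require Import Reals Lra.
Open Scope R_scope.

Record linfun := LinFun { lf_a : R; lf_b : R }.

Definition lf_eval (f : linfun) (x : R) : R := lf_a f * x + lf_b f.

Definition monotone (f : linfun) : Prop := 0 < lf_a f.

Definition identical (f : linfun) : Prop := forall x, lf_eval f x = x.

Definition lf_comp (h g : linfun) : linfun :=
  LinFun (lf_a h * lf_a g) (lf_a h * lf_b g + lf_b h).

Lemma lf_comp_eval h g x : lf_eval (lf_comp h g) x = lf_eval h (lf_eval g x).
Proof. unfold lf_eval, lf_comp; simpl; ring. Qed.

Definition polar_angle (x y : R) : R :=
  let r := sqrt (x * x + y * y) in
  if Rle_dec 0 y then acos (x / r) else 2 * PI - acos (x / r).

(* theta(f) : the polar angle of vec f = (b, 1 - a); None stands for bottom *)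
Definition theta (f : linfun) : option R :=
  let x := lf_b f in let y := 1 - lf_a f in
  if Req_dec_T x 0 then (if Req_dec_T y 0 then None else Some (polar_angle x y))
  else Some (polar_angle x y).

Definition eq2pi (t1 t2 : R) : Prop := exists k : Z, t1 - t2 = 2 * PI * IZR k.

Definition open_arc (t1 t2 : R) (t : R) : Prop :=
  exists l1 l2, eq2pi l1 t1 /\ eq2pi l2 t2 /\ 0 <= l2 - l1 < 2 * PI /\ l1 < t < l2.

Definition mod2pi (S : R -> Prop) (t : R) : Prop := exists l, S l /\ eq2pi t l.

(* Main.v *)
Require Import Defs.
From Stdlib Require Import Reals Lra Lia ZArith.
Open Scope R_scope.

Lemma period_Z (x : R) (k : Z) : sin (x + 2 * PI * IZR k) = sin x /\ cos (x + 2 * PI * IZR k) = cos x.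
Proof.
  destruct (Z_le_gt_dec 0 k) as [Hk|Hk].
  - rewrite <- (Z2Nat.id k Hk), <- INR_IZR_INZ.
    replace (x + 2 * PI * INR (Z.to_nat k)) with (x + 2 * INR (Z.to_nat k) * PI) by ring.
    now rewrite sin_period, cos_period.
  - assert (Hk' : (0 <= - k)%Z) by lia.
    set (y := x + 2 * PI * IZR k).
    assert (Hx : x = y + 2 * INR (Z.to_nat (-k)) * PI).
    { rewrite INR_IZR_INZ, Z2Nat.id by lia. rewrite opp_IZR. unfold y; ring. }
    rewrite Hx, sin_period, cos_period. auto.
Qed.

Lemma eq2pi_sc a b : eq2pi a b -> sin a = sin b /\ cos a = cos b.
Proof.
  intros [k Hk]. replace a with (b + 2 * PI * IZR k) by lra. apply period_Z.
Qed.

Lemma polar_char x y : ~ (x = 0 /\ y = 0) ->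
  let r := sqrt (x * x + y * y) in let t := polar_angle x y in
  0 < r /\ 0 <= t < 2 * PI /\ x = r * cos t /\ y = r * sin t.
Proof.
  intros Hne r t.
  assert (Hp : 0 < x * x + y * y).
  { destruct (Req_dec x 0); [assert (y <> 0) by tauto|]; nra. }
  assert (Hr : 0 < r) by (apply sqrt_lt_R0; exact Hp).
  assert (Hr2 : r * r = x * x + y * y) by (apply sqrt_sqrt; lra).
  set (c := x / r).
  assert (Hcx : x = r * c) by (unfold c; field; lra).
  assert (Hc2 : c * c * (r * r) = x * x) by (rewrite Hcx; ring).
  assert (Hc : -1 <= c <= 1).
  { assert (c * c <= 1).
    { apply (Rmult_le_reg_r (r*r)); [nra|]. nra. }
    split; nra. }
  assert (Hs2 : sqrt (1 - c²) = Rabs y / r).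
  { unfold Rsqr. apply Rsqr_inj.
    - apply sqrt_pos.
    - apply Rle_mult_inv_pos; [apply Rabs_pos|lra].
    - rewrite Rsqr_sqrt by nra. unfold Rsqr.
      replace (Rabs y / r * (Rabs y / r)) with ((Rabs y * Rabs y) / (r * r)) by (field; lra).
      rewrite <- Rabs_mult, Rabs_right by nra.
      apply (Rmult_eq_reg_r (r*r)); [|nra].
      field_simplify; [|lra]. nra. }
  pose proof (acos_bound c) as Hb.
  split; [exact Hr|].
  unfold t, polar_angle; fold r; fold c.
  destruct (Rle_dec 0 y) as [Hy|Hy].
  - rewrite cos_acos, sin_acos by exact Hc. rewrite Hs2, Rabs_right by lra.
    repeat split; try lra. 
    + pose proof PI_RGT_0; lra.
    + field; lra.
  - assert (Hac : 0 < acos c).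
    { destruct (Rle_lt_or_eq_dec 0 (acos c)) as [?|E]; [lra|auto|].
      exfalso. assert (c = 1) by (rewrite <- (cos_acos c Hc), <- E; apply cos_0).
      rewrite H in Hcx. assert (y * y = 0) by nra. nra. }
    rewrite cos_minus. rewrite sin_minus. rewrite cos_2PI, sin_2PI. rewrite (cos_acos c Hc), (sin_acos c Hc).
    rewrite Hs2, Rabs_left by lra.
    repeat split; try lra.
    + field; lra.
Qed.

Definition vth (x y : R) : option R :=
  if Req_dec_T x 0 then (if Req_dec_T y 0 then None else Some (polar_angle x y))
  else Some (polar_angle x y).

Lemma vth_some x y t : vth x y = Some t -> ~ (x = 0 /\ y = 0) /\ t = polar_angle x y.
Proof.
  unfold vth; destruct (Req_dec_T x 0), (Req_dec_T y 0); intro H; inversion H; subst; split; auto; lra.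
Qed.

Lemma vth_none x y : vth x y = None <-> x = 0 /\ y = 0.
Proof.
  unfold vth; destruct (Req_dec_T x 0), (Req_dec_T y 0); split; intro H; try discriminate; try lra; auto.
Qed.

Lemma vth_nz x y : ~ (x = 0 /\ y = 0) -> vth x y = Some (polar_angle x y).
Proof.
  unfold vth; destruct (Req_dec_T x 0), (Req_dec_T y 0); intro H; auto; lra.
Qed.

Lemma polar_scale c x y : 0 < c -> ~ (x = 0 /\ y = 0) ->
  polar_angle (c * x) (c * y) = polar_angle x y.
Proof.
  intros Hc Hne. unfold polar_angle.
  assert (Hp : 0 < x * x + y * y).
  { destruct (Req_dec x 0); [assert (y <> 0) by tauto|]; nra. }
  assert (E : sqrt (c * x * (c * x) + c * y * (c * y)) = c * sqrt (x * x + y * y)).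
  { replace (c * x * (c * x) + c * y * (c * y)) with ((c * c) * (x * x + y * y)) by ring.
    rewrite sqrt_mult by nra. rewrite sqrt_square by lra. reflexivity. }
  rewrite E.
  assert (Hr : 0 < sqrt (x * x + y * y)) by (apply sqrt_lt_R0; lra).
  replace (c * x / (c * sqrt (x * x + y * y))) with (x / sqrt (x * x + y * y)) by (field; lra).
  destruct (Rle_dec 0 (c * y)), (Rle_dec 0 y); auto; exfalso; nra.
Qed.

Lemma cross_ang r1 t1 r2 t2 :
  (r1 * cos t1) * (r2 * sin t2) - (r1 * sin t1) * (r2 * cos t2) = r1 * r2 * sin (t2 - t1).
Proof. rewrite sin_minus; ring. Qed.

Lemma dot_ang r1 t1 r2 t2 :
  (r1 * cos t1) * (r2 * cos t2) + (r1 * sin t1) * (r2 * sin t2) = r1 * r2 * cos (t2 - t1).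
Proof. rewrite cos_minus; ring. Qed.

Lemma s_pos d : 0 <= d < 2 * PI -> 0 < sin d -> 0 < d < PI.
Proof.
  intros Hd Hs. destruct (Rle_lt_dec PI d).
  - pose proof (sin_le_0 d r ltac:(lra)); lra.
  - destruct (Req_dec d 0) as [E|E]; [rewrite E, sin_0 in Hs; lra|lra].
Qed.

Lemma s_zero d : 0 <= d < 2 * PI -> sin d = 0 -> d = 0 \/ d = PI.
Proof.
  intros Hd Hs. destruct (sin_eq_O_2PI_0 d) as [?|[?|?]]; auto; lra.
Qed.

Lemma normz x : - (2 * PI) < x < 2 * PI -> exists d j, 0 <= d < 2 * PI /\ d = x + 2 * PI * IZR j.
Proof.
  intros Hx. destruct (Rle_lt_dec 0 x).
  - exists x, 0%Z. split; [lra|]. simpl; ring.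
  - exists (x + 2 * PI), 1%Z. split; [lra|]. simpl; ring.
Qed.

Lemma eq2pi_of a b (k : Z) : a = b + 2 * PI * IZR k -> eq2pi a b.
Proof. intros H; exists k; lra. Qed.

Lemma arc0pi x : - (2 * PI) < x < 2 * PI -> (open_arc 0 PI x <-> 0 < sin x).
Proof.
  intros Hx. split.
  - intros (l1 & l2 & [k1 H1] & [k2 H2] & H12 & Hl).
    assert (Hk : IZR (k2 - k1) = 0).
    { rewrite minus_IZR. pose proof PI_RGT_0.
      assert (-1 < IZR k2 - IZR k1 < 1).
      { rewrite <- minus_IZR in *. split.
        - apply Rmult_lt_reg_l with (2*PI); [lra|]. rewrite minus_IZR. nra.
        - apply Rmult_lt_reg_l with (2*PI); [lra|]. rewrite minus_IZR. nra. }
      rewrite <- minus_IZR in *. destruct H0 as [Ha Hb].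
      apply lt_IZR in Ha; apply lt_IZR in Hb. assert (k2 - k1 = 0)%Z by lia.
      rewrite H0; reflexivity. }
    rewrite minus_IZR in Hk.
    assert (E : sin x = sin (x - l1)).
    { symmetry; apply (eq2pi_sc (x - l1) x). apply (eq2pi_of _ _ (- k1)). rewrite opp_IZR; lra. }
    rewrite E. apply sin_gt_0; nra.
  - intros Hs. destruct (normz x Hx) as (d & j & Hd & Ed).
    assert (Hsd : sin d = sin x).
    { apply eq2pi_sc. apply (eq2pi_of _ _ j). lra. }
    destruct (s_pos d Hd) as [Hd1 Hd2]; [lra|].
    exists (- 2 * PI * IZR j), (PI - 2 * PI * IZR j). repeat split; try lra.
    + apply (eq2pi_of _ _ (- j)). rewrite opp_IZR; lra.
    + apply (eq2pi_of _ _ (- j)). rewrite opp_IZR; lra.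
Qed.

Lemma mod0pi x : - (2 * PI) < x < 2 * PI ->
  (mod2pi (fun l => l = 0 \/ l = PI) x <-> sin x = 0).
Proof.
  intros Hx. split.
  - intros (l & Hl & He). rewrite (proj1 (eq2pi_sc _ _ He)).
    destruct Hl as [->| ->]; [apply sin_0|apply sin_PI].
  - intros Hs. destruct (normz x Hx) as (d & j & Hd & Ed).
    assert (Hsd : sin d = sin x).
    { apply eq2pi_sc. apply (eq2pi_of _ _ j). lra. }
    exists d. split.
    + apply s_zero; lra.
    + apply (eq2pi_of _ _ (- j)). rewrite opp_IZR; lra.
Qed.

Lemma vth_char x y t : vth x y = Some t ->
  exists r, 0 < r /\ 0 <= t < 2 * PI /\ x = r * cos t /\ y = r * sin t.
Proof.
  intros H. destruct (vth_some _ _ _ H) as [Hn ->].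
  destruct (polar_char x y Hn) as (Hr & Ht & Hx & Hy).
  eexists; eauto.
Qed.

Lemma G1 ux uy vx vy wx wy tg th al be :
  0 < al -> 0 < be -> vth ux uy = Some tg -> vth vx vy = Some th ->
  wx = al * ux + be * vx -> wy = al * uy + be * vy ->
  ((exists t, vth wx wy = Some t /\ open_arc tg th t) <-> 0 < sin (th - tg)).
Proof.
  intros Ha Hb Hu Hv Hwx Hwy.
  destruct (vth_char _ _ _ Hu) as (r1 & Hr1 & Htg & Hux & Huy).
  destruct (vth_char _ _ _ Hv) as (r2 & Hr2 & Hth & Hvx & Hvy).
  pose proof PI_RGT_0 as HPI.
  assert (HX : ux * vy - uy * vx = r1 * r2 * sin (th - tg)) by (rewrite Hux, Huy, Hvx, Hvy; apply cross_ang).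
  assert (Cuw : ux * wy - uy * wx = be * (ux * vy - uy * vx)) by (rewrite Hwx, Hwy; ring).
  assert (Cwv : wx * vy - wy * vx = al * (ux * vy - uy * vx)) by (rewrite Hwx, Hwy; ring).
  split.
  - intros (tw & Hw & (l1 & l2 & [k1 H1] & [k2 H2] & H12 & Hl)).
    destruct (vth_char _ _ _ Hw) as (rw & Hrw & Htw & Hwx' & Hwy').
    assert (Su : ux * wy - uy * wx = r1 * rw * sin (tw - l1)).
    { rewrite Hux, Huy, Hwx', Hwy', cross_ang. f_equal.
      apply eq2pi_sc. apply (eq2pi_of _ _ k1). lra. }
    assert (Sv : wx * vy - wy * vx = rw * r2 * sin (l2 - tw)).
    { rewrite Hvx, Hvy, Hwx', Hwy', cross_ang. f_equal.
      apply eq2pi_sc. apply (eq2pi_of _ _ (- k2)). rewrite opp_IZR. lra. }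
    destruct (Rlt_le_dec 0 (sin (th - tg))) as [?|Hle]; [assumption|exfalso].
    assert (HX0 : ux * vy - uy * vx <= 0).
    { rewrite HX. assert (0 < r1 * r2) by nra. nra. }
    assert (A1 : sin (tw - l1) <= 0).
    { assert (0 < r1 * rw) by nra. assert (r1 * rw * sin (tw - l1) <= 0) by nra. nra. }
    assert (A2 : sin (l2 - tw) <= 0).
    { assert (0 < rw * r2) by nra. assert (rw * r2 * sin (l2 - tw) <= 0) by nra. nra. }
    destruct (Rlt_le_dec (tw - l1) PI).
    + pose proof (sin_gt_0 (tw - l1) ltac:(lra) ltac:(lra)); lra.
    + destruct (Rlt_le_dec (l2 - tw) PI).
      * pose proof (sin_gt_0 (l2 - tw) ltac:(lra) ltac:(lra)); lra.
      * lra.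
  - intros Hs.
    assert (HXp : 0 < ux * vy - uy * vx) by (rewrite HX; assert (0 < r1 * r2) by nra; nra).
    assert (Hwn : ~ (wx = 0 /\ wy = 0)).
    { intros [E1 E2]. rewrite E1, E2 in Cuw. nra. }
    exists (polar_angle wx wy). split; [apply vth_nz; exact Hwn|].
    destruct (vth_char _ _ _ (vth_nz _ _ Hwn)) as (rw & Hrw & Htw & Hwx' & Hwy').
    set (tw := polar_angle wx wy) in *.
    destruct (normz (th - tg) ltac:(lra)) as (d & jd & Hd & Ed).
    destruct (normz (tw - tg) ltac:(lra)) as (e & je & He & Ee).
    assert (Sd : sin d = sin (th - tg)) by (apply eq2pi_sc; apply (eq2pi_of _ _ jd); lra).
    assert (Se : sin e = sin (tw - tg)) by (apply eq2pi_sc; apply (eq2pi_of _ _ je); lra).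
    assert (Sde : sin (d - e) = sin (th - tw)).
    { apply eq2pi_sc; apply (eq2pi_of _ _ (jd - je)). rewrite minus_IZR. lra. }
    destruct (s_pos d Hd) as [Hd1 Hd2]; [lra|].
    assert (Su : ux * wy - uy * wx = r1 * rw * sin (tw - tg))
      by (rewrite Hux, Huy, Hwx', Hwy'; apply cross_ang).
    assert (Sv : wx * vy - wy * vx = rw * r2 * sin (th - tw))
      by (rewrite Hvx, Hvy, Hwx', Hwy'; apply cross_ang).
    assert (Pe : 0 < sin e).
    { rewrite Se. assert (0 < r1 * rw) by nra. assert (0 < r1 * rw * sin (tw - tg)) by nra. nra. }
    destruct (s_pos e He Pe) as [He1 He2].
    assert (Pde : 0 < sin (d - e)).
    { rewrite Sde. assert (0 < rw * r2) by nra. assert (0 < rw * r2 * sin (th - tw)) by nra. nra. }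
    assert (Hde : e < d).
    { destruct (Rlt_le_dec e d); auto. exfalso.
      destruct (Req_dec d e) as [E|E].
      - rewrite E, Rminus_diag, sin_0 in Pde; lra.
      - pose proof (sin_lt_0_var (d - e) ltac:(lra) ltac:(lra)); lra. }
    exists (tg - 2 * PI * IZR je), (th + 2 * PI * IZR (jd - je)). repeat split.
    + apply (eq2pi_of _ _ (- je)). rewrite opp_IZR; lra.
    + apply (eq2pi_of _ _ (jd - je)). lra.
    + rewrite minus_IZR; lra.
    + rewrite minus_IZR; lra.
    + lra.
    + rewrite minus_IZR; lra.
Qed.

Lemma par ux uy vx vy : ~ (ux = 0 /\ uy = 0) -> ux * vy - uy * vx = 0 ->
  exists l, vx = l * ux /\ vy = l * uy.
Proof.
  intros Hn H. destruct (Req_dec ux 0) as [E|E].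
  - assert (uy <> 0) by tauto. exists (vy / uy). split.
    + subst ux. assert (uy * vx = 0) by lra.
      destruct (Rmult_integral _ _ H1); [contradiction|]. subst; lra.
    + field; auto.
  - exists (vx / ux). split.
    + field; auto.
    + apply (Rmult_eq_reg_l ux); [|auto]. field_simplify; [|auto]. lra.
Qed.

Lemma Gcommon ux uy vx vy wx wy tg th al be :
  0 < al -> 0 < be -> vth ux uy = Some tg -> vth vx vy = Some th ->
  wx = al * ux + be * vx -> wy = al * uy + be * vy ->
  ux * vy - uy * vx = 0 ->
  exists l, vx = l * ux /\ vy = l * uy /\ l <> 0 /\
   (0 < al + be * l -> vth wx wy = Some tg) /\
   (al + be * l = 0 -> vth wx wy = None) /\
   (al + be * l < 0 -> vth wx wy = Some th).
Proof.
  intros Ha Hb Hu Hv Hwx Hwy HX.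
  destruct (vth_some _ _ _ Hu) as [Hun Etg].
  destruct (vth_some _ _ _ Hv) as [Hvn Eth].
  destruct (par _ _ _ _ Hun HX) as (l & Hl1 & Hl2).
  assert (Hl : l <> 0) by (intro; subst; apply Hvn; split; ring).
  exists l. repeat split; auto.
  - intros Hc. rewrite Hwx, Hwy, Hl1, Hl2.
    replace (al * ux + be * (l * ux)) with ((al + be * l) * ux) by ring.
    replace (al * uy + be * (l * uy)) with ((al + be * l) * uy) by ring.
    rewrite vth_nz.
    + rewrite polar_scale; auto. congruence.
    + intros [E1 E2]. apply Hun. split; nra.
  - intros Hc. apply vth_none. rewrite Hwx, Hwy, Hl1, Hl2. split; nra.
  - intros Hc.
    assert (Hlneg : l < 0) by nra.
    assert (Eu1 : ux = / l * vx) by (rewrite Hl1; field; auto).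
    assert (Eu2 : uy = / l * vy) by (rewrite Hl2; field; auto).
    set (c := (al + be * l) / l).
    assert (Hcl : c * l = al + be * l) by (unfold c; field; auto).
    assert (Hc0 : 0 < c) by nra.
    rewrite Hwx, Hwy.
    replace (al * ux + be * vx) with (c * vx)
      by (rewrite Hl1; replace (c * (l * ux)) with ((c * l) * ux) by ring; rewrite Hcl; ring).
    replace (al * uy + be * vy) with (c * vy)
      by (rewrite Hl2; replace (c * (l * uy)) with ((c * l) * uy) by ring; rewrite Hcl; ring).
    rewrite vth_nz.
    + rewrite polar_scale; auto. congruence.
    + intros [E1 E2]. apply Hvn. split; nra.
Qed.

Lemma G234 ux uy vx vy wx wy tg th al be :
  0 < al -> 0 < be -> vth ux uy = Some tg -> vth vx vy = Some th ->
  wx = al * ux + be * vx -> wy = al * uy + be * vy ->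
  ((vth wx wy = Some tg \/ vth wx wy = Some th \/ vth wx wy = None) <-> sin (th - tg) = 0) /\
  (th = tg -> vth wx wy = Some th) /\
  (vth wx wy = None -> eq2pi (th - tg) PI).
Proof.
  intros Ha Hb Hu Hv Hwx Hwy.
  destruct (vth_char _ _ _ Hu) as (r1 & Hr1 & Htg & Hux & Huy).
  destruct (vth_char _ _ _ Hv) as (r2 & Hr2 & Hth & Hvx & Hvy).
  pose proof PI_RGT_0 as HPI.
  assert (HX : ux * vy - uy * vx = r1 * r2 * sin (th - tg)) by (rewrite Hux, Huy, Hvx, Hvy; apply cross_ang).
  assert (HD : ux * vx + uy * vy = r1 * r2 * cos (th - tg)) by (rewrite Hux, Huy, Hvx, Hvy; apply dot_ang).
  assert (Cuw : ux * wy - uy * wx = be * (ux * vy - uy * vx)) by (rewrite Hwx, Hwy; ring).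
  assert (Cwv : wx * vy - wy * vx = al * (ux * vy - uy * vx)) by (rewrite Hwx, Hwy; ring).
  assert (Hr12 : 0 < r1 * r2) by nra.
  assert (Xs : ux * vy - uy * vx = 0 <-> sin (th - tg) = 0).
  { rewrite HX. split; intro H; [|rewrite H; ring].
    destruct (Rmult_integral _ _ H); [lra|auto]. }
  assert (Hun : ~ (ux = 0 /\ uy = 0)) by (apply (vth_some _ _ _ Hu)).
  assert (Hu2 : 0 < ux * ux + uy * uy).
  { destruct (Req_dec ux 0); [assert (uy <> 0) by tauto|]; nra. }
  assert (Nw : vth wx wy = None -> ux * vy - uy * vx = 0).
  { intros H. apply vth_none in H. destruct H as [E1 E2]. rewrite E1, E2 in Cuw. nra. }
  split; [|split].
  - split.
    + intros [H|[H|H]]; apply Xs.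
      * destruct (vth_char _ _ _ H) as (rw & Hrw & _ & Hwx' & Hwy').
        assert (ux * wy - uy * wx = 0).
        { rewrite Hux, Huy, Hwx', Hwy', cross_ang, Rminus_diag, sin_0. ring. }
        nra.
      * destruct (vth_char _ _ _ H) as (rw & Hrw & _ & Hwx' & Hwy').
        assert (wx * vy - wy * vx = 0).
        { rewrite Hvx, Hvy, Hwx', Hwy', cross_ang, Rminus_diag, sin_0. ring. }
        nra.
      * auto.
    + intros Hs. apply Xs in Hs.
      destruct (Gcommon _ _ _ _ _ _ _ _ _ _ Ha Hb Hu Hv Hwx Hwy Hs) as (l & _ & _ & _ & P1 & P2 & P3).
      destruct (Rtotal_order 0 (al + be * l)) as [H|[H|H]]; auto.
  - intros Ett.
    assert (Hs : ux * vy - uy * vx = 0) by (apply Xs; rewrite Ett, Rminus_diag; apply sin_0).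
    destruct (Gcommon _ _ _ _ _ _ _ _ _ _ Ha Hb Hu Hv Hwx Hwy Hs) as (l & Hl1 & Hl2 & _ & P1 & P2 & P3).
    assert (Dp : 0 < ux * vx + uy * vy) by (rewrite HD, Ett, Rminus_diag, cos_0; lra).
    rewrite Hl1, Hl2 in Dp.
    assert (0 < l) by nra.
    rewrite Ett. apply P1. nra.
  - intros Hn. assert (Hs := Nw Hn).
    destruct (Gcommon _ _ _ _ _ _ _ _ _ _ Ha Hb Hu Hv Hwx Hwy Hs) as (l & Hl1 & Hl2 & _ & P1 & P2 & P3).
    assert (Hc : al + be * l = 0).
    { destruct (Rtotal_order 0 (al + be * l)) as [H|[H|H]]; auto.
      - rewrite (P1 H) in Hn; discriminate.
      - rewrite (P3 H) in Hn; discriminate. }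
    assert (Hl : l < 0) by nra.
    assert (Dn : cos (th - tg) < 0).
    { assert (ux * vx + uy * vy < 0) by (rewrite Hl1, Hl2; nra). nra. }
    apply Xs in Hs.
    destruct (normz (th - tg) ltac:(lra)) as (d & j & Hd & Ed).
    assert (Sd : sin d = sin (th - tg) /\ cos d = cos (th - tg)) by (apply eq2pi_sc; apply (eq2pi_of _ _ j); lra).
    destruct (s_zero d Hd) as [E|E]; [lra| |].
    + exfalso. rewrite E, cos_0 in Sd. lra.
    + apply (eq2pi_of _ _ (- j)). rewrite opp_IZR. lra.
Qed.

Lemma theta_vth f : theta f = vth (lf_b f) (1 - lf_a f).
Proof. reflexivity. Qed.

Theorem mainTheorem7 (g h : linfun) (tg th : R) :
  monotone g -> monotone h -> ~ identical g -> ~ identical h ->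
  theta g = Some tg -> theta h = Some th ->
  (* (i) *)
  ((open_arc 0 PI (th - tg) <->
      exists t, theta (lf_comp h g) = Some t /\ open_arc tg th t) /\
   ((exists t, theta (lf_comp h g) = Some t /\ open_arc tg th t) <->
      exists t, theta (lf_comp g h) = Some t /\ open_arc tg th t)) /\
  (* (ii) *)
  ((mod2pi (fun l => l = 0 \/ l = PI) (th - tg) <->
      (theta (lf_comp h g) = Some tg \/ theta (lf_comp h g) = Some th \/
       theta (lf_comp h g) = None)) /\
   ((theta (lf_comp h g) = Some tg \/ theta (lf_comp h g) = Some th \/
       theta (lf_comp h g) = None) <->
      (theta (lf_comp g h) = Some tg \/ theta (lf_comp g h) = Some th \/
       theta (lf_comp g h) = None))) /\
  (* (iii) *)
  (th = tg -> theta (lf_comp h g) = Some th /\ theta (lf_comp g h) = Some th) /\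
  (* (iv) *)
  ((theta (lf_comp h g) = None <-> theta (lf_comp g h) = None) /\
   (theta (lf_comp h g) = None -> eq2pi (th - tg) PI) /\
   (theta (lf_comp g h) = None -> eq2pi (th - tg) PI)).
Proof.
  destruct g as [a1 b1], h as [a2 b2]. unfold monotone; simpl.
  intros H1 H2 _ _ Hg Hh.
  rewrite theta_vth in Hg, Hh |- *. rewrite !theta_vth. simpl in *.
  assert (Rg := Hg). apply vth_char in Rg. destruct Rg as (r1 & _ & Htg & _).
  assert (Rh := Hh). apply vth_char in Rh. destruct Rh as (r2 & _ & Hth & _).
  assert (Hr : - (2 * PI) < th - tg < 2 * PI) by lra.
  assert (E1 : a2 * b1 + b2 = a2 * b1 + 1 * b2) by ring.
  assert (E2 : 1 - a2 * a1 = a2 * (1 - a1) + 1 * (1 - a2)) by ring.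
  assert (F1 : a1 * b2 + b1 = 1 * b1 + a1 * b2) by ring.
  assert (F2 : 1 - a1 * a2 = 1 * (1 - a1) + a1 * (1 - a2)) by ring.
  pose proof (G1 _ _ _ _ _ _ _ _ _ _ H2 Rlt_0_1 Hg Hh E1 E2) as A.
  pose proof (G1 _ _ _ _ _ _ _ _ _ _ Rlt_0_1 H1 Hg Hh F1 F2) as B.
  pose proof (G234 _ _ _ _ _ _ _ _ _ _ H2 Rlt_0_1 Hg Hh E1 E2) as (C1 & C2 & C3).
  pose proof (G234 _ _ _ _ _ _ _ _ _ _ Rlt_0_1 H1 Hg Hh F1 F2) as (D1 & D2 & D3).
  pose proof (arc0pi _ Hr) as P. pose proof (mod0pi _ Hr) as Q.
  repeat split; try tauto.
  - intros Hn; apply vth_none in Hn; apply vth_none; destruct Hn as [X Y]; split; [|lra].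
    assert (a1 * (a2 * b1 + b2) = 0) by (rewrite X; ring).
    assert (b1 * (1 - a2 * a1) = 0) by (rewrite Y; ring). nra.
  - intros Hn; apply vth_none in Hn; apply vth_none; destruct Hn as [X Y]; split; [|lra].
    assert (a2 * (a1 * b2 + b1) = 0) by (rewrite X; ring).
    assert (b2 * (1 - a1 * a2) = 0) by (rewrite Y; ring). nra.
Qed.
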